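(* Let $n \geq 2$ and let $G$ be a graph that has the maximum atom-bond connectivity index among all graphs with $n$ vertices and edge-connectivity $1$. Then $G \cong K_n(1)$.
   Context: All graphs are simple and undirected. For a graph $G$ and a vertex $v$, $d(v)$ denotes the degree of $v$. The atom-bond connectivity (ABC) index is ${\rm ABC}(G)=\sum_{uv\in E(G)} \sqrt{\frac{d(u)+d(v)-2}{d(u)d(v)}}$. The edge-connectivity of a graph is the minimum number of edges whose removal disconnects it. For graphs $G,H$ on disjoint vertex sets, $G+H$ is their disjoint union, and the join $G\vee H$ is the graph on $V(G)\cup V(H)$ with edge set $E(G)\cup E(H)\cup\{uv: u\in V(G), v\in V(H)\}$. $K_n(k)$ denotes the graph $K_k \vee (K_1 + K_{n-k-1})$, i.e., the graph obtained from $K_{n-1}$ by adding one new vertex joined to exactly $k$ vertices of $K_{n-1}$. *)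

(* Defs.v *)
From HB Require Import structures.
From mathcomp Require Import all_boot all_order all_fingroup all_algebra.
From mathcomp Require Import reals.
Set Implicit Arguments. Unset Strict Implicit. Unset Printing Implicit Defensive.
Import Order.TTheory GRing.Theory Num.Theory.

Definition simple_graph (n : nat) (e : rel 'I_n) : Prop :=
  symmetric e /\ irreflexive e.

Definition edges (n : nat) (e : rel 'I_n) : {set {set 'I_n}} :=
  [set [set x; y] | x in 'I_n, y in 'I_n & e x y].

Definition del_edges (n : nat) (e : rel 'I_n) (F : {set {set 'I_n}}) : rel 'I_n :=
  fun x y => e x y && ([set x; y] \notin F).

Definition connected (n : nat) (e : rel 'I_n) : Prop :=
  forall x y : 'I_n, connect e x y.

Definition has_edge_cut (n : nat) (e : rel 'I_n) (k : nat) : Prop :=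
  exists F : {set {set 'I_n}},
    [/\ F \subset edges e, #|F| = k & ~ connected (del_edges e F)].

Definition edge_connectivity_is (n : nat) (e : rel 'I_n) (k : nat) : Prop :=
  has_edge_cut e k /\ (forall j, (j < k)%N -> ~ has_edge_cut e j).

Definition deg (n : nat) (e : rel 'I_n) (x : 'I_n) : nat := #|[set y | e x y]|.

Local Open Scope ring_scope.

Definition ABC (R : realType) (n : nat) (e : rel 'I_n) : R :=
  \sum_(x : 'I_n) \sum_(y : 'I_n | (x < y)%N && e x y)
     Num.sqrt (((deg e x)%:R + (deg e y)%:R - 2) / ((deg e x)%:R * (deg e y)%:R)).

(* K_n(k) = K_k \/ (K_1 + K_{n-k-1}) on 'I_n: vertex n-1 is the extra vertex,
   adjacent exactly to the vertices 0..k-1; all other pairs are adjacent. *)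
Definition Knk (n k : nat) : rel 'I_n :=
  fun x y => (x != y) &&
    (if (x == n.-1 :> nat) then (y < k)%N
     else if (y == n.-1 :> nat) then (x < k)%N else true).

Definition isomorphic (n : nat) (e1 e2 : rel 'I_n) : Prop :=
  exists f : {perm 'I_n}, forall x y, e1 x y = e2 (f x) (f y).

Arguments Knk n k : clear implicits.
Arguments ABC R {n} e.

(* Main.v *)
Require Import Defs.
From HB Require Import structures.
From mathcomp Require Import all_boot all_order all_fingroup all_algebra.
From mathcomp Require Import reals.
From mathcomp Require Import ring lra zify.
Import Order.TTheory GRing.Theory Num.Theory.
Local Open Scope ring_scope.

Local Open Scope ring_scope.
Section Real. Variable R : realType.
Definition fA (i j : nat) : R :=
  Num.sqrt (((i%:R + j%:R - 2) / (i%:R * j%:R))).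

Lemma fA_sym i j : fA i j = fA j i.
Proof. by rewrite /fA (addrC (i%:R : R)) (mulrC (i%:R : R)). Qed.

Lemma le_diff (a b nn dd : R) : a - b = nn / dd -> 0 <= nn -> 0 < dd -> b <= a.
Proof. by move=> h hN hD; rewrite -subr_ge0 h divr_ge0 // ltW. Qed.

Lemma lt_diff (a b nn dd : R) : a - b = nn / dd -> 0 < nn -> 0 < dd -> b < a.
Proof. by move=> h hN hD; rewrite -subr_gt0 h divr_gt0. Qed.

Lemma le_sqrt_r (u r : R) : 0 <= u -> u ^+ 2 <= r -> u <= Num.sqrt r.
Proof.
move=> hu hr; rewrite -(ger0_norm hu) -sqrtr_sqr ler_sqrt //.
exact: le_trans (sqr_ge0 u) hr.
Qed.

Lemma lt_sqrt_r (u r : R) : 0 <= u -> u ^+ 2 < r -> u < Num.sqrt r.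
Proof.
move=> hu hr; rewrite -(ger0_norm hu) -sqrtr_sqr ltr_sqrt //.
exact: le_lt_trans (sqr_ge0 u) hr.
Qed.

Lemma sqrt_le_r (u r : R) : 0 <= u -> r <= u ^+ 2 -> Num.sqrt r <= u.
Proof.
move=> hu hr; rewrite -(ger0_norm hu) -sqrtr_sqr ler_sqrt //.
exact: sqr_ge0.
Qed.

Lemma sqrt_sq (r : R) : 0 <= r -> Num.sqrt r ^+ 2 = r.
Proof. exact: sqr_sqrtr. Qed.

Lemma natr_ge1 (d : nat) : (1 <= d)%N -> 1 <= (d%:R : R).
Proof. by rewrite ler1n. Qed.

Definition cdec (d : nat) : R :=
  if d == 1%N then 1 - Num.sqrt (2^-1) else Num.sqrt ((d.+1)%:R^-1) / (2 * d%:R).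

Lemma dec_bound (d t : nat) : (1 <= d)%N -> (1 <= t)%N ->
  fA d t - fA d.+1 t <= cdec d.
Proof.
move=> hd ht; rewrite /cdec /fA.
have hy : 1 <= (t%:R : R) by rewrite ler1n.
case: eqP => [->|/eqP d1].
  have -> : ((2%:R + t%:R - 2) / (2%:R * t%:R) : R) = 2^-1.
    by field; rewrite pnatr_eq0 -lt0n.
  apply: lerB => //.
  apply: sqrt_le_r => //; rewrite expr1n.
  have ty : (t%:R : R) != 0 by rewrite pnatr_eq0 -lt0n.
  apply: (le_diff _ _ (1) (t%:R)); last by lra.
    by field.
  lra.
have hd2 : (2 <= d)%N by case: d hd d1 => [|[|]].
have hx : 2 <= (d%:R : R) by rewrite (ler_nat R 2).
have e1 : ((d.+1)%:R : R) = d%:R + 1 by rewrite natr1.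
rewrite e1.
move: (d%:R : R) hx => x hx; move: (t%:R : R) hy => y hy.
set A := Num.sqrt _; set B := Num.sqrt _; set al := Num.sqrt _.
have x0 : x != 0 by apply/negP => /eqP h; lra.
have y0 : y != 0 by apply/negP => /eqP h; lra.
have x10 : x + 1 != 0 by apply/negP => /eqP h; lra.
have ha0 : 0 <= (x+1)^-1 by rewrite invr_ge0; lra.
have hal2 : al ^+ 2 = (x+1)^-1 by rewrite sqrt_sq.
have hal : 0 < al.
  by rewrite sqrtr_gt0 invr_gt0; lra.
have rA : 0 <= (x + y - 2) / (x * y) by apply: divr_ge0; nra.
have rB : 0 <= (x + 1 + y - 2) / ((x + 1) * y) by apply: divr_ge0; nra.
have hA : al <= A.
  rewrite /al /A ler_sqrt //.
  apply: (le_diff _ _ (x * x - x + y - 2) (x * y * (x + 1))).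
  - by field; rewrite ?x10 ?y0 ?x0.
  - nra.
  - nra.
have hB : al <= B.
  rewrite /al /B ler_sqrt //.
  apply: (le_diff _ _ (x - 1) (y * (x + 1))).
  - by field; rewrite ?x10 ?y0 ?x0.
  - nra.
  - nra.
have hAB : A ^+ 2 - B ^+ 2 <= al ^+ 2 / x.
  rewrite !sqrt_sq //.
  apply: (le_diff _ _ (2) (x * (x+1) * y)).
  - by field; rewrite ?x10 ?y0 ?x0.
  - lra.
  - nra.
set z := x^-1.
have hz : x * z = 1 by rewrite /z mulfV.
have hz0 : 0 < z by rewrite /z invr_gt0; lra.
have -> : al / (2 * x) = al * z / 2 by rewrite /z; field.
have hAB' : A ^+ 2 - B ^+ 2 <= al ^+ 2 * z by rewrite -/z in hAB.
rewrite leNgt; apply/negP => h.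
have h1 : 0 < A - B - al * z / 2 by lra.
have h2 : 0 <= A + B - 2 * al by lra.
have h3 : 0 <= (A - B - al * z / 2) * (A + B - 2 * al) by apply: mulr_ge0; lra.
have h4 : 0 < (A - B - al * z / 2) * al by apply: mulr_gt0.
have h6 : 0 <= al * z * (A + B - 2 * al) by apply: mulr_ge0 => //; apply: mulr_ge0; lra.
have h5 : A ^+ 2 - B ^+ 2 = (A - B) * (A + B) by ring.
nra.
Qed.
End Real.

Local Open Scope ring_scope.
Section Real. Variable R : realType.

Lemma sqinv_facts {d : nat} : (1 <= d)%N ->
  let a := Num.sqrt ((d%:R + 1)^-1 : R) in
  [/\ 0 < a, a ^+ 2 = (d%:R + 1)^-1 & a ^+ 2 <= 2^-1].
Proof.
move=> hd a.
have hx : 1 <= (d%:R : R) by rewrite ler1n.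
have e1 : ((d.+1)%:R : R) = d%:R + 1 by rewrite natr1.
rewrite /a; move: (d%:R : R) hx => x hx.
have h0 : 0 <= (x + 1)^-1 by rewrite invr_ge0; lra.
rewrite sqrt_sq //; split => //.
  by rewrite sqrtr_gt0 invr_gt0; lra.
rewrite lef_pV2 ?posrE; lra.
Qed.

Lemma delta_le {d : nat} : (1 <= d)%N ->
  cdec R d * d%:R <= Num.sqrt ((d%:R + 1)^-1) / 2 /\
  (d = 1%N -> cdec R d * d%:R < Num.sqrt ((d%:R + 1)^-1) / 2).
Proof.
move=> hd; rewrite /cdec natr1.
case: eqP => [->|/eqP d1].
  have e2 : ((1.+1)%:R : R) = 2 by [].
  rewrite e2 mulr1.
  set g := Num.sqrt _.
  have hg0 : 0 <= g by exact: sqrtr_ge0.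
  have hg2 : g ^+ 2 = 2^-1 by rewrite sqrt_sq // invr_ge0; lra.
  have hg : 2 / 3 < g.
    rewrite ltNge; apply/negP => h.
    have : g ^+ 2 <= (2/3) ^+ 2 by rewrite ler_pXn2r // ?nnegrE; lra.
    rewrite hg2; lra.
  by split => [|_]; lra.
have hx : 1 <= (d%:R : R) by rewrite ler1n.
have -> : Num.sqrt ((d.+1)%:R^-1 : R) / (2 * d%:R) * d%:R =
  Num.sqrt ((d.+1)%:R^-1 : R) / 2.
  field; apply/negP => /eqP h; lra.
by split => // h; rewrite h in d1.
Qed.

Lemma gain_bound (dx dy : nat) : (1 <= dx)%N -> (1 <= dy)%N ->
  cdec R dx * dx%:R + cdec R dy * dy%:R < fA R dx.+1 dy.+1.
Proof.
move=> hx hy.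
have [ha0 ha2 hah] := sqinv_facts hx.
have [hb0 hb2 hbh] := sqinv_facts hy.
move: ha0 ha2 hah hb0 hb2 hbh (delta_le hx) (delta_le hy).
rewrite /fA.
have e1 : ((dx.+1)%:R : R) = dx%:R + 1 by rewrite natr1.
have e2 : ((dy.+1)%:R : R) = dy%:R + 1 by rewrite natr1.
rewrite e1 e2.
set a := Num.sqrt ((dx%:R + 1)^-1); set b := Num.sqrt ((dy%:R + 1)^-1).
move=> ha0 ha2 hah hb0 hb2 hbh.
have hxr : 1 <= (dx%:R : R) by rewrite ler1n.
have hyr : 1 <= (dy%:R : R) by rewrite ler1n.
have hr : (dx%:R + 1 + (dy%:R + 1) - 2) / ((dx%:R + 1) * (dy%:R + 1)) =
   a ^+ 2 + b ^+ 2 - 2 * a ^+ 2 * b ^+ 2 :> R.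
  rewrite ha2 hb2; field.
  by rewrite !(paddr_eq0, negb_and) ?oner_eq0 ?orbT ?ler0n.
rewrite hr => [[dxl dxs] [dyl dys]].
have hab : 0 < a * b by apply: mulr_gt0.
have hab2 : (a * b) ^+ 2 <= 4^-1.
  rewrite exprMn.
  have : a ^+ 2 * b ^+ 2 <= 2^-1 * 2^-1 by apply: ler_pM => //; apply: sqr_ge0.
  lra.
have hab3 : a * b <= 2^-1.
  rewrite leNgt; apply/negP => h.
  have : (2^-1) ^+ 2 < (a * b) ^+ 2 by rewrite ltr_pXn2r // ?nnegrE; lra.
  lra.
have hsq : 0 <= (a - b) ^+ 2 by apply: sqr_ge0.
have hk : 0 <= a * b * (1 - 2 * (a * b)) by apply: mulr_ge0; lra.
have key : ((a + b) / 2) ^+ 2 <= a ^+ 2 + b ^+ 2 - 2 * a ^+ 2 * b ^+ 2.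
  have -> : ((a + b) / 2) ^+ 2 = (a ^+ 2 + b ^+ 2 + 2 * (a * b)) / 4 by field.
  lra.
have hge : (a + b) / 2 <= Num.sqrt (a ^+ 2 + b ^+ 2 - 2 * a ^+ 2 * b ^+ 2).
  by apply: le_sqrt_r => //; lra.
case: (ltngtP dx 1) => [|hx2|hx1]; first by rewrite ltnNge hx.
  case: (ltngtP dy 1) => [|hy2|hy1]; first by rewrite ltnNge hy.
    have hx3 : 2 <= (dx%:R : R) by rewrite (ler_nat R 2).
    have hy3 : 2 <= (dy%:R : R) by rewrite (ler_nat R 2).
    have ha3 : a ^+ 2 <= 3^-1 by rewrite ha2 lef_pV2 ?posrE; lra.
    have hab4 : a ^+ 2 * b ^+ 2 <= 3^-1 * 2^-1 by apply: ler_pM => //; apply: sqr_ge0.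
    have hab5 : a * b < 2^-1.
      rewrite ltNge; apply/negP => h.
      have : (2^-1) ^+ 2 <= (a * b) ^+ 2 by rewrite ler_pXn2r // ?nnegrE; lra.
      rewrite exprMn; lra.
    have hk2 : 0 < a * b * (1 - 2 * (a * b)) by apply: mulr_gt0; lra.
    have key2 : ((a + b) / 2) ^+ 2 < a ^+ 2 + b ^+ 2 - 2 * a ^+ 2 * b ^+ 2.
      have -> : ((a + b) / 2) ^+ 2 = (a ^+ 2 + b ^+ 2 + 2 * (a * b)) / 4 by field.
      lra.
    have : (a + b) / 2 < Num.sqrt (a ^+ 2 + b ^+ 2 - 2 * a ^+ 2 * b ^+ 2).
      by apply: lt_sqrt_r => //; lra.
    lra.
  have := dys hy1; lra.
have := dxs hx1; lra.
Qed.
End Real.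

Local Open Scope ring_scope.
Section Real. Variable R : realType.
Local Notation fA := (fA R).

Definition RA (a b : nat) : R :=
  fA a (a-1) *+ (a-1) + fA a b + (fA (a-1) a + fA (a-1) (a-1) *+ (a-2)) *+ (a-1).
Definition Phi2 (a b : nat) : R := RA a b + RA b a.
Definition Pk (k : nat) : R := fA (k-1) (k-1) *+ (k-2) *+ (k-1).
Definition Qk (k : nat) : R := fA k (k-1) *+ (k-1) + fA (k-1) k *+ (k-1).
Definition Sq (j : nat) : R := Num.sqrt (2 * j%:R).

Lemma RA_split a b : RA a b = Qk a + Pk a + fA a b.
Proof.
rewrite /RA /Qk /Pk !mulrnDl.
move: (fA a (a-1) *+ (a-1)) (fA a b) (fA (a-1) a *+ (a-1)) (fA (a-1) (a-1) *+ (a-2) *+ (a-1)).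
move=> X B Y Z; ring.
Qed.

Lemma mul_sqrt (c r : R) : 0 <= c -> 0 <= r -> c * Num.sqrt r = Num.sqrt (c ^+ 2 * r).
Proof.
move=> hc hr; rewrite sqrtrM ?sqr_ge0 // sqrtr_sqr ger0_norm //.
Qed.

Lemma Pk_eq j : Pk j.+2 = j%:R * Sq j.
Proof.
rewrite /Pk /Sq !subSS !subn0 -(mulr_natr (fA _ _)) -(mulr_natr (_ * _)) /fA -natr1.
have hj : 0 <= (j%:R : R) by rewrite ler0n.
move: (j%:R : R) hj => x hx.
rewrite -mulrA mulrC (mul_sqrt (x * (x + 1))); last 2 first.
- nra.
- apply: divr_ge0; nra.
rewrite (mul_sqrt x) //; last by lra.
congr Num.sqrt; field; apply/negP => /eqP h; lra.
Qed.

Lemma Qk_eq j : Qk j.+2 = Num.sqrt (4 * (j%:R + 1) * (2 * j%:R + 1) / (j%:R + 2)).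
Proof.
rewrite /Qk !subSS !subn0 (fA_sym R j.+1) -mulr2n -(mulr_natr (fA _ _)) -(mulr_natr (_ * _)) /fA.
have -> : (j.+2%:R : R) = j%:R + 2.
  by rewrite -[j.+2]addn2 natrD.
have -> : (j.+1%:R : R) = j%:R + 1 by rewrite natr1.
have hj : 0 <= (j%:R : R) by rewrite ler0n.
move: (j%:R : R) hj => x hx.
rewrite -mulrA mulrC (mul_sqrt ((x + 1) * 2)); last 2 first.
- nra.
- apply: divr_ge0; nra.
congr Num.sqrt; field; apply/andP; split; apply/negP => /eqP h; lra.
Qed.
End Real.

Local Open Scope ring_scope.
Section Real. Variable R : realType.
Local Notation fA := (fA R).
Local Notation Sq := (Sq R).
Local Notation Qk := (Qk R).
Local Notation Pk := (Pk R).

Lemma Sq2 j : Sq j ^+ 2 = 2 * j%:R.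
Proof. by rewrite /Sq sqrt_sq // mulr_ge0 ?ler0n. Qed.

Lemma Sq_ge0 j : 0 <= Sq j.
Proof. exact: sqrtr_ge0. Qed.

Lemma Sq_le i j : (i <= j)%N -> Sq i <= Sq j.
Proof.
move=> h; rewrite /Sq ler_sqrt ?mulr_ge0 ?ler0n //.
by rewrite ler_pM2l ?ltr0n // ler_nat.
Qed.

Lemma step_bound (N : nat) : (N%:R + 3/2) * Sq N <= (N%:R + 1) * Sq N.+1.
Proof.
have h0 : 0 <= (N%:R : R) by rewrite ler0n.
rewrite -(ler_pXn2r (n := 2)) // ?nnegrE; last 2 first.
- apply: mulr_ge0; [lra | exact: Sq_ge0].
- apply: mulr_ge0; [lra | exact: Sq_ge0].
rewrite !exprMn !Sq2 -(natr1 N).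
move: (N%:R : R) h0 => x hx.
nra.
Qed.

Lemma Qk_le l i : (l <= i)%N -> Qk l.+2 <= Qk i.+2.
Proof.
move=> hli; rewrite !Qk_eq.
have hl : 0 <= (l%:R : R) by rewrite ler0n.
have hi : (l%:R : R) <= i%:R by rewrite ler_nat.
move: (l%:R : R) (i%:R : R) hl hi => y x hy hxy.
rewrite ler_sqrt; last by apply: divr_ge0; nra.
apply: (le_diff R _ _ (4 * ((x - y) * (2 * x * y + 4 * x + 4 * y + 5))) ((x + 2) * (y + 2))).
- field; apply/andP; split; apply/negP => /eqP h; lra.
- apply: mulr_ge0; first lra.
  apply: mulr_ge0; nra.
- nra.
Qed.

Lemma Qk_small m N : (1 <= m)%N -> (2 * m <= N)%N -> Qk m.+2 <= 3/2 * Sq N.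
Proof.
move=> hm hN; rewrite Qk_eq.
apply: sqrt_le_r; first by apply: mulr_ge0; [lra|exact: Sq_ge0].
rewrite exprMn Sq2.
have h1 : 1 <= (m%:R : R) by rewrite ler1n.
have h2 : 2 * (m%:R : R) <= N%:R by rewrite -(ler_nat R) natrM in hN.
move: (m%:R : R) (N%:R : R) h1 h2 => x y hx hy.
apply: (@le_trans _ _ (9 * x)); last by lra.
apply: (le_diff R _ _ (x * x + 6 * x - 4) (x + 2)).
- field; apply/negP => /eqP h; lra.
- nra.
- lra.
Qed.

Lemma Qk2 : Qk 2 = Sq 1.
Proof.
rewrite (Qk_eq R 0) /Sq; congr Num.sqrt.
by rewrite mulr0 add0r; field.
Qed.

Lemma P_part m l : (m <= l)%N ->
  Pk m.+2 + Pk l.+2 + Qk m.+2 <= Pk (m + l + 1).+2.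
Proof.
move=> hml; rewrite !Pk_eq.
have h1 : m%:R * Sq m + l%:R * Sq l <= (m + l)%:R * Sq (m + l).
  rewrite natrD mulrDl; apply: lerD.
    by apply: ler_wpM2l; [rewrite ler0n | apply: Sq_le; rewrite leq_addr].
  by apply: ler_wpM2l; [rewrite ler0n | apply: Sq_le; rewrite leq_addl].
have h2 := step_bound (m + l).
rewrite addn1 -natr1.
case: m hml h1 h2 => [|m] hml h1 h2.
  rewrite Qk2.
  have h3 : Sq 1 <= Sq (0 + l).+1 by apply: Sq_le.
  have h4 : (0 + l)%:R * Sq (0 + l) <= (0 + l)%:R * Sq (0 + l).+1.
    by apply: ler_wpM2l; [rewrite ler0n | apply: Sq_le].
  lra.
have h3 : Qk m.+3 <= 3/2 * Sq (m.+1 + l).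
  apply: Qk_small => //.
  by rewrite mul2n -addnn leq_add2l.
lra.
Qed.

Lemma f_part a b : (2 <= a)%N -> (2 <= b)%N -> fA a b < fA 1 (a + b - 1).
Proof.
move=> ha hb; rewrite /fA.
have hc : ((a + b - 1)%N%:R : R) = a%:R + b%:R - 1.
  by rewrite natrB ?natrD // addn_gt0 (leq_trans _ ha).
rewrite hc.
have hx : 2 <= (a%:R : R) by rewrite (ler_nat R 2).
have hy : 2 <= (b%:R : R) by rewrite (ler_nat R 2).
move: (a%:R : R) (b%:R : R) hx hy => x y hx hy.
rewrite ltr_sqrt; last first.
  rewrite mul1r; apply: divr_gt0; lra.
apply: (lt_diff R _ _ ((x + y - 2) * (x * y - x - y + 1)) (x * y * (x + y - 1))).
- by field; apply/and3P; split; apply/negP => /eqP h; lra.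
- apply: mulr_gt0; nra.
- apply: mulr_gt0; nra.
Qed.

Lemma Phi2_lt a b : (2 <= a)%N -> (2 <= b)%N -> Phi2 R a b < Phi2 R 1 (a + b - 1).
Proof.
wlog hab : a b / (a <= b)%N.
  move=> H ha hb; case: (leqP a b) => h; first exact: H.
  have := H b a (ltnW h) hb ha.
  by rewrite /Phi2 addnC [RA R b a + _]addrC.
move=> ha hb.
have hf := f_part _ _ ha hb.
have hf' := hf; rewrite fA_sym in hf'.
rewrite /Phi2 !RA_split (fA_sym R b a) (fA_sym R (a + b - 1) 1).
case: a ha hab hf hf' => [|[|m]] // _; case: b hb => [|[|l]] // _ hab hf hf'.
have hc : (m.+2 + l.+2 - 1 = (m + l + 1).+2)%N.
  by rewrite addn1 !addSn !addnS subn1.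
rewrite hc in hf hf' *.
have q1 : Qk 1 = 0 by rewrite /Qk subnn !mulr0n addr0.
have p1 : Pk 1 = 0 by rewrite /Pk subnn !mulr0n.
rewrite q1 p1.
have h1 : Qk l.+2 <= Qk (m + l + 1).+2 by apply: Qk_le; lia.
have h2 := P_part m l hab.
lra.
Qed.
End Real.

Local Open Scope ring_scope.
Set Implicit Arguments. Unset Strict Implicit. Unset Printing Implicit Defensive.

Section G1.
Variable R : realType.
Local Notation fA := (fA R).

Definition H2 n (e : rel 'I_n) (p q : 'I_n) : R :=
  if e p q then fA (deg e p) (deg e q) else 0.
Definition S2 n (e : rel 'I_n) : R := \sum_(p : 'I_n) \sum_(q : 'I_n) H2 e p q.

Lemma H2_sym n (e : rel 'I_n) : symmetric e -> forall p q, H2 e p q = H2 e q p.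
Proof. by move=> hs p q; rewrite /H2 hs fA_sym. Qed.

Lemma S2_ABC n (e : rel 'I_n) : simple_graph e -> S2 e = ABC R e *+ 2.
Proof.
case=> hs hi.
have E1 : S2 e = \sum_(p : 'I_n) \sum_(q : 'I_n) (if (p < q)%N then H2 e p q else 0) +
                 \sum_(p : 'I_n) \sum_(q : 'I_n) (if (q < p)%N then H2 e p q else 0).
  rewrite /S2 -big_split; apply: eq_bigr => p _.
  rewrite -big_split; apply: eq_bigr => q _ /=.
  case: (ltngtP p q) => h; rewrite ?addr0 ?add0r //.
  have -> : p = q by apply: val_inj.
  by rewrite /H2 hi.
have E2 : \sum_(p : 'I_n) \sum_(q : 'I_n) (if (q < p)%N then H2 e p q else 0) =
          \sum_(p : 'I_n) \sum_(q : 'I_n) (if (p < q)%N then H2 e p q else 0).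
  rewrite exchange_big; apply: eq_bigr => p _; apply: eq_bigr => q _.
  by rewrite H2_sym.
have E3 : ABC R e = \sum_(p : 'I_n) \sum_(q : 'I_n) (if (p < q)%N then H2 e p q else 0).
  rewrite /ABC; apply: eq_bigr => p _; rewrite big_mkcond; apply: eq_bigr => q _.
  by rewrite /H2; case: (p < q)%N; case: (e p q).
by rewrite E1 E2 -E3 mulr2n.
Qed.

Lemma sum_split3 n (F : 'I_n -> R) (x y : 'I_n) : x != y ->
  \sum_q F q = F x + F y + \sum_(q | (q != x) && (q != y)) F q.
Proof.
move=> hxy; rewrite (bigD1 x) //= (bigD1 y) //= 1?eq_sym // addrA.
by congr (_ + _); apply: eq_bigl => q; rewrite andbC.
Qed.

Definition add_edge n (e : rel 'I_n) (x y : 'I_n) : rel 'I_n :=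
  fun p q => e p q || ((p == x) && (q == y)) || ((p == y) && (q == x)).

Lemma deg_add n (e : rel 'I_n) x y : x != y -> ~~ e x y -> symmetric e ->
  forall p, deg (add_edge e x y) p = (deg e p + ((p == x) || (p == y)))%N.
Proof.
move=> hxy hnxy hs p; rewrite /deg.
have nyx : ~~ e y x by rewrite hs.
case: (eqVneq p x) => [->|hpx].
  have -> : [set q | add_edge e x y x q] = y |: [set q | e x q].
    by apply/setP => q; rewrite !inE /add_edge eqxx (negbTE hxy) /= orbF orbC.
  by rewrite cardsU1 inE hnxy addnC.
case: (eqVneq p y) => [->|hpy].
  have -> : [set q | add_edge e x y y q] = x |: [set q | e y q].
    by apply/setP => q; rewrite !inE /add_edge eqxx eq_sym (negbTE hxy) /= orbF orbC.
  by rewrite cardsU1 inE nyx addnC.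
rewrite addn0; apply: eq_card => q; rewrite !inE /add_edge.
by rewrite (negbTE hpx) (negbTE hpy) /= !orbF.
Qed.

Lemma ABC_add_lt n (e : rel 'I_n) x y : simple_graph e -> x != y -> ~~ e x y ->
  (0 < deg e x)%N -> (0 < deg e y)%N -> ABC R e < ABC R (add_edge e x y).
Proof.
move=> [hs hi] hxy hn dx0 dy0.
have hs' : symmetric (add_edge e x y).
  move=> p q; rewrite /add_edge hs; case: (p == x) (q == y) (p == y) (q == x) => [] [] [] [];
  by rewrite /= ?orbT ?orbF.
have hi' : irreflexive (add_edge e x y).
  move=> p; rewrite /add_edge hi /=.
  case: (eqVneq p x) => [->|]; first by rewrite (negbTE hxy) andbF.
  by move=> _; rewrite andbF.
have hdeg := deg_add hxy hn hs.
suff : S2 e < S2 (add_edge e x y).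
  by rewrite !S2_ABC // !mulr2n => h; lra.
pose D p q := H2 (add_edge e x y) p q - H2 e p q.
have hD : S2 (add_edge e x y) - S2 e = \sum_p \sum_q D p q.
  by rewrite /S2 -sumrB; apply: eq_bigr => p _; rewrite -sumrB.
have Dsym : forall p q, D p q = D q p by move=> p q; rewrite /D H2_sym // (H2_sym hs).
have D0 : forall p q, p != x -> p != y -> q != x -> q != y -> D p q = 0.
  move=> p q px py qx qy; rewrite /D /H2 !hdeg (negbTE px) (negbTE py) (negbTE qx) (negbTE qy).
  by rewrite !addn0 /add_edge (negbTE px) (negbTE py) /= !orbF subrr.
have Dxx : D x x = 0 by rewrite /D /H2 hi hi' subrr.
have Dyy : D y y = 0 by rewrite /D /H2 hi hi' subrr.
have Dxy : D x y = fA (deg e x).+1 (deg e y).+1.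
  rewrite /D /H2 (negbTE hn) !hdeg eqxx eq_refl orbT /= !addn1 subr0.
  by rewrite /add_edge !eqxx /= orbT.
have Dyx : D y x = fA (deg e x).+1 (deg e y).+1 by rewrite Dsym.
have Dq : forall z w, (z == x) || (z == y) -> w != x -> w != y ->
    - (if e z w then cdec R (deg e z) else 0) <= D z w.
  move=> z w hz wx wy; rewrite /D /H2.
  have -> : (add_edge e x y) z w = e z w.
    rewrite /add_edge (negbTE wx) (negbTE wy) /= !andbF !orbF //.
  case: ifP => hzw; last by rewrite subrr oppr0.
  rewrite !hdeg hz (negbTE wx) (negbTE wy) !addn0 addn1 lerNl opprB.
  apply: dec_bound.
    case/orP: hz => /eqP -> //.
  apply/card_gt0P; exists z; by rewrite inE hs.
have Cz : forall z, (z == x) || (z == y) ->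
    \sum_(q | (q != x) && (q != y)) (if e z q then cdec R (deg e z) else 0) =
    cdec R (deg e z) * (deg e z)%:R.
  move=> z hz.
  have := sum_split3 (fun q => if e z q then cdec R (deg e z) else 0) hxy.
  have -> : e z x = false by case/orP: hz => /eqP ->; rewrite ?hi // hs (negbTE hn).
  have -> : e z y = false by case/orP: hz => /eqP ->; rewrite ?hi // (negbTE hn).
  rewrite !add0r => <-.
  rewrite -big_mkcond (eq_bigl (fun q => q \in [set r | e z r])); last by move=> q; rewrite inE.
  by rewrite sumr_const mulr_natr.
have Sb : forall z, (z == x) || (z == y) ->
    - (cdec R (deg e z) * (deg e z)%:R) <= \sum_(q | (q != x) && (q != y)) D z q.
  move=> z hz; rewrite -(Cz z hz) -sumrN; apply: ler_sum => q /andP [qx qy].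
  exact: Dq.
have hx1 : (x == x) || (x == y) by rewrite eqxx.
have hy1 : (y == x) || (y == y) by rewrite eqxx orbT.
have Tot : \sum_p \sum_q D p q =
   (D x y + D y x) + (\sum_(q | (q != x) && (q != y)) D x q) *+ 2 +
   (\sum_(q | (q != x) && (q != y)) D y q) *+ 2.
  rewrite (sum_split3 _ hxy) (sum_split3 (D x) hxy) (sum_split3 (D y) hxy) Dxx Dyy.
  have -> : \sum_(p | (p != x) && (p != y)) \sum_q D p q =
      \sum_(p | (p != x) && (p != y)) (D x p + D y p).
    apply: eq_bigr => p /andP [px py].
    rewrite (sum_split3 _ hxy) big1 ?addr0 ?(Dsym p x) ?(Dsym p y) //.
    by move=> q /andP [qx qy]; apply: D0.
  have -> : \sum_(p | (p != x) && (p != y)) (D x p + D y p) = \sum_(q | (q != x) && (q != y)) D x q + \sum_(q | (q != x) && (q != y)) D y q by rewrite big_split.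
  rewrite !mulr2n; lra.
rewrite -subr_gt0 hD Tot Dxy Dyx !mulr2n.
have := Sb x hx1; have := Sb y hy1.
have := gain_bound R _ _ dx0 dy0.
lra.
Qed.

End G1.

Local Open Scope ring_scope.
Set Implicit Arguments. Unset Strict Implicit. Unset Printing Implicit Defensive.

Definition Hshape n (e : rel 'I_n) (A : {set 'I_n}) (u v : 'I_n) : Prop :=
  [/\ u \in A, v \notin A & forall p q, e p q = (p != q) &&
     (((p \in A) == (q \in A)) || ((p == u) && (q == v)) || ((p == v) && (q == u)))].

Lemma Hshape_sym n (e : rel 'I_n) A u v : Hshape e A u v -> Hshape e (~: A) v u.
Proof.
case=> hu hv he; split; rewrite ?inE ?hu ?negbK //.
move=> p q; rewrite he !inE.
by case: (p \in A); case: (q \in A); case: (p == u); case: (q == v);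
   case: (p == v); case: (q == u).
Qed.

Lemma Hshape_simple n (e : rel 'I_n) A u v : Hshape e A u v -> simple_graph e.
Proof.
case=> hu hv he; split.
  move=> p q; rewrite !he eq_sym; congr (_ && _).
  by rewrite (eq_sym (q \in A)); case: (p == u); case: (q == v);
     case: (p == v); case: (q == u); rewrite /= ?orbT ?orbF.
by move=> p; rewrite he eqxx.
Qed.

Lemma Hnb_u n (e : rel 'I_n) A u v : Hshape e A u v ->
  [set q | e u q] = v |: (A :\ u).
Proof.
case=> hu hv he; apply/setP => q; rewrite !inE he hu eqxx /=.
have huv : u != v by apply: contraNneq hv => <-.
case: (eqVneq q v) => [->|hqv]; first by rewrite (negbTE hv) huv.
rewrite (negbTE huv) /= !orbF eq_sym.
by case: (q \in A); rewrite ?andbT ?andbF.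
Qed.

Lemma Hnb_p n (e : rel 'I_n) A u v p : Hshape e A u v -> p \in A -> p != u ->
  [set q | e p q] = A :\ p.
Proof.
case=> hu hv he hp hpu; apply/setP => q; rewrite !inE he hp (negbTE hpu) /=.
have -> : (p == v) = false by apply/negbTE; apply: contraNneq hv => <-.
by rewrite eq_sym; case: (q \in A); rewrite /= ?andbT ?andbF.
Qed.

Lemma cardD1 n (A : {set 'I_n}) u : u \in A -> #|A :\ u| = (#|A| - 1)%N.
Proof. by move=> hu; rewrite (cardsD1 u A) hu add1n subn1. Qed.

Lemma deg_Hu n (e : rel 'I_n) A u v : Hshape e A u v -> deg e u = #|A|.
Proof.
move=> H; have [hu hv _] := H.
rewrite /deg (Hnb_u H) cardsU1 !inE (negbTE hv) andbF /= cardD1 //.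
have : (0 < #|A|)%N by apply/card_gt0P; exists u.
by move=> h; rewrite add1n subn1 prednK.
Qed.

Lemma deg_Hp n (e : rel 'I_n) A u v p : Hshape e A u v -> p \in A -> p != u ->
  deg e p = (#|A| - 1)%N.
Proof. by move=> H hp hpu; rewrite /deg (Hnb_p H hp hpu) cardD1. Qed.

Section Rows.
Variable R : realType.
Local Notation fA := (fA R).

Lemma row_u n (e : rel 'I_n) A u v : Hshape e A u v ->
  \sum_q H2 R e u q = fA #|A| (#|A| - 1) *+ (#|A| - 1) + fA #|A| #|~: A|.
Proof.
move=> H; have [hu hv _] := H.
rewrite /H2 -big_mkcond (eq_bigl (fun q => q \in v |: (A :\ u))); last first.
  by move=> q; rewrite -(Hnb_u H) inE.
rewrite big_setU1 /=; last by rewrite !inE (negbTE hv) andbF.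
rewrite (deg_Hu H) (deg_Hu (Hshape_sym H)) addrC; congr (_ + _).
rewrite (eq_bigr (fun _ => fA #|A| (#|A| - 1))); last first.
  by move=> q; rewrite !inE => /andP [hqu hq]; rewrite (deg_Hp H hq hqu).
by rewrite sumr_const cardD1.
Qed.

Lemma row_p n (e : rel 'I_n) A u v p : Hshape e A u v -> p \in A -> p != u ->
  \sum_q H2 R e p q =
  fA (#|A| - 1) #|A| + fA (#|A| - 1) (#|A| - 1) *+ (#|A| - 2).
Proof.
move=> H hp hpu; have [hu hv _] := H.
rewrite /H2 -big_mkcond (eq_bigl (fun q => q \in A :\ p)); last first.
  by move=> q; rewrite -(Hnb_p H hp hpu) inE.
rewrite (big_setD1 u) /=; last by rewrite !inE eq_sym hpu.
rewrite (deg_Hp H hp hpu) (deg_Hu H); congr (_ + _).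
rewrite (eq_bigr (fun _ => fA (#|A| - 1) (#|A| - 1))); last first.
  by move=> q; rewrite !inE => /and3P [hqu hqp hq]; rewrite (deg_Hp H hq hqu).
rewrite sumr_const cardD1; last by rewrite !inE eq_sym hpu.
by rewrite cardD1 // -subnDA.
Qed.

Lemma sum_A n (e : rel 'I_n) A u v : Hshape e A u v ->
  \sum_(p in A) \sum_q H2 R e p q = RA R #|A| #|~: A|.
Proof.
move=> H; have [hu hv _] := H.
rewrite (big_setD1 u) //= (row_u H).
rewrite (eq_bigr (fun _ => fA (#|A| - 1) #|A| + fA (#|A| - 1) (#|A| - 1) *+ (#|A| - 2))); last first.
  by move=> p; rewrite !inE => /andP [hpu hp]; rewrite (row_p H hp hpu).
by rewrite sumr_const cardD1 // /RA addrA.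
Qed.

Lemma ABC_H n (e : rel 'I_n) A u v : Hshape e A u v ->
  ABC R e *+ 2 = Phi2 R #|A| #|~: A|.
Proof.
move=> H; rewrite -S2_ABC; last exact: Hshape_simple H.
rewrite /S2 (bigID (fun p => p \in A)) /= (sum_A H).
have := sum_A (Hshape_sym H); rewrite setCK /Phi2 => <-.
by congr (_ + _); apply: eq_bigl => p; rewrite inE.
Qed.
End Rows.

Local Open Scope ring_scope.
Set Implicit Arguments. Unset Strict Implicit. Unset Printing Implicit Defensive.

Lemma del0 n (e : rel 'I_n) : del_edges e set0 =2 e.
Proof. by move=> p q; rewrite /del_edges inE andbT. Qed.

Lemma conn_not_cut0 n (e : rel 'I_n) : connected e -> ~ has_edge_cut e 0.
Proof.
move=> hc [F [_ hF hnc]]; apply: hnc; rewrite (cards0_eq hF) => x y.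
by rewrite (eq_connect (del0 e)).
Qed.

Lemma cut0_conn n (e : rel 'I_n) : ~ has_edge_cut e 0 -> connected e.
Proof.
move=> h x y; case: (boolP (connect e x y)) => // hxy; exfalso; apply: h.
exists set0; split; rewrite ?sub0set ?cards0 // => hc.
by move: (hc x y); rewrite (eq_connect (del0 e)) (negbTE hxy).
Qed.

Lemma set2_eq n (p q u v : 'I_n) :
  ((p == u) && (q == v)) || ((p == v) && (q == u)) -> [set p; q] = [set u; v].
Proof. by case/orP => /andP [/eqP -> /eqP ->] //; rewrite setUC. Qed.

Definition pairb n (u v p q : 'I_n) := ((p == u) && (q == v)) || ((p == v) && (q == u)).

Lemma ec1_split n (e : rel 'I_n) (A : {set 'I_n}) u v :
  connected e -> u \in A -> v \notin A -> e u v ->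
  (forall p q, e p q -> ((p \in A) == (q \in A)) || pairb u v p q) ->
  edge_connectivity_is e 1.
Proof.
move=> hc hu hv huv hside; split; last first.
  by case=> // _; apply: conn_not_cut0.
exists [set [set u; v]]; split.
- rewrite sub1set; apply/imset2P; exists u v => //; by rewrite inE.
- by rewrite cards1.
move=> hc'.
have hcl : closed (del_edges e [set [set u; v]]) A.
  move=> p q /andP [hpq]; rewrite inE => hne.
  case/orP: (hside p q hpq) => [/eqP //|hp].
  by rewrite (set2_eq hp) eqxx in hne.
have := closed_connect hcl (hc' u v).
by rewrite hu (negbTE hv).
Qed.

Lemma conn_nb n (e : rel 'I_n) p q : connect e p q -> p != q -> (0 < deg e p)%N.
Proof.
case/connectP => s; case: s => [/= _ ->|r s /= /andP [hpr _] _]; first by rewrite eqxx.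
by move=> _; apply/card_gt0P; exists r; rewrite inE.
Qed.

Lemma Hshape_conn n (e : rel 'I_n) A u v : Hshape e A u v -> connected e.
Proof.
move=> H; have [hs hi] := Hshape_simple H; have [hu hv he] := H.
have huv : u != v by apply: contraNneq hv => <-.
have hcs := sym_connect_sym hs.
have toU : forall p, connect e p u.
  move=> p; case: (eqVneq p u) => [->|hpu]; first exact: connect0.
  have evu : e v u by rewrite he eq_sym huv !eqxx /= ?orbT ?andbT.
  case: (boolP (p \in A)) => hpA.
    by apply: connect1; rewrite he hpu hpA hu.
  case: (eqVneq p v) => [->|hpv]; first exact: connect1.
  apply: (connect_trans (y := v)); last exact: connect1.
  by apply: connect1; rewrite he hpv (negbTE hpA) (negbTE hv).
move=> x y; apply: (connect_trans (toU x)); by rewrite hcs.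
Qed.

Lemma Hshape_ec1 n (e : rel 'I_n) A u v : Hshape e A u v -> edge_connectivity_is e 1.
Proof.
move=> H; have [hu hv he] := H.
apply: (ec1_split (Hshape_conn H) hu hv).
  rewrite he !eqxx /= hu (negbTE hv) /= ?orbT ?andbT; apply: contraNneq hv => <-.
  by [].
by move=> p q; rewrite he /pairb => /andP [_]; rewrite orbA.
Qed.

Lemma Hshape_iso n (e e' : rel 'I_n) A A' u v u' v' (f : 'I_n -> 'I_n) :
  Hshape e A u v -> Hshape e' A' u' v' -> injective f ->
  (forall p, (f p \in A') = (p \in A)) -> f u = u' -> f v = v' ->
  forall p q, e p q = e' (f p) (f q).
Proof.
move=> [_ _ he] [_ _ he'] fi hA hu hv p q.
by rewrite he he' (inj_eq fi) !hA -hu -hv !(inj_eq fi).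
Qed.

Local Open Scope ring_scope.
Set Implicit Arguments. Unset Strict Implicit. Unset Printing Implicit Defensive.

Lemma add_simple n (e : rel 'I_n) x y : simple_graph e -> x != y ->
  simple_graph (add_edge e x y).
Proof.
move=> [hs hi] hxy; split.
  move=> p q; rewrite /add_edge hs; case: (p == x) (q == y) (p == y) (q == x) => [] [] [] [];
  by rewrite /= ?orbT ?orbF.
move=> p; rewrite /add_edge hi /=.
case: (eqVneq p x) => [->|]; first by rewrite (negbTE hxy) andbF.
by move=> _; rewrite andbF.
Qed.

Lemma Knk_H n' : Hshape (Knk n'.+2 1) [set ord_max] ord_max ord0.
Proof.
split; rewrite ?inE //.
move=> x y; rewrite /Knk !inE /=.
have ex : forall z : 'I_n'.+2, (z == n'.+1 :> nat) = (z == ord_max) by [].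
have e0 : forall z : 'I_n'.+2, (z < 1)%N = (z == ord0).
  by move=> z; rewrite ltnS leqn0.
rewrite !ex !e0.
have hm : (ord_max : 'I_n'.+2) != ord0 by [].
case: (eqVneq x ord_max) => [->|hx]; case: (eqVneq y ord_max) => [->|hy] //=.
- by rewrite orbF.
- by rewrite andbT.
all: by rewrite ?orbF ?andbT ?andbF.
Qed.

Lemma iso_single n' (e : rel 'I_n'.+2) x y :
  Hshape e [set x] x y -> isomorphic e (Knk n'.+2 1).
Proof.
move=> H; have [_ hy _] := H.
have hxy : y != x by move: hy; rewrite inE.
set w : 'I_n'.+2 := ord_max.
pose f := (tperm x w * tperm (tperm x w y) ord0)%g.
have fx : f x = w.
  rewrite /f permM tpermL tpermD //.
    rewrite /w; apply/eqP => h.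
    have : tperm x ord_max (tperm x ord_max y) = tperm x ord_max ord_max by rewrite h.
    by rewrite tpermK tpermR => /eqP; rewrite (negbTE hxy).
have fy : f y = ord0 by rewrite /f permM tpermL.
exists f; apply: (Hshape_iso H (Knk_H n')) => //.
  exact: perm_inj.
by move=> p; rewrite !inE -/w -fx (inj_eq perm_inj).
Qed.

Unset Implicit Arguments.
Set Strict Implicit.
Local Open Scope ring_scope.

Lemma set2_inv n (p q u v : 'I_n) : [set p; q] = [set u; v] -> p != q -> pairb u v p q.
Proof.
move=> h hpq; rewrite /pairb.
have hp : p \in [set u; v] by rewrite -h !inE eqxx.
have hq : q \in [set u; v] by rewrite -h !inE eqxx orbT.
move: hp hq hpq; rewrite !inE.
case: (eqVneq p u) => [->|pu] /=; case: (eqVneq q v) => [->|qv] //=; rewrite ?orbF ?andbF ?orbT //.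
- by move=> _ /eqP ->; rewrite eqxx.
- by move=> /eqP ->; rewrite eqxx.
- by move=> -> ->.
Qed.

Theorem theorem4 (R : realType) (n : nat) (e : rel 'I_n) :
  (2 <= n)%N ->
  simple_graph e ->
  edge_connectivity_is e 1%N ->
  (forall e' : rel 'I_n, simple_graph e' -> edge_connectivity_is e' 1%N ->
     ABC R e' <= ABC R e) ->
  isomorphic e (Knk n 1%N).
Proof.
case: n e => [|[|n']] e // _ hsim hec hmax.
have [hs hi] := hsim.
have hconn := cut0_conn (hec.2 0%N isT).
case: hec.1 => F [hFs hF1 hnc].
have /cards1P [s hs1] : #|F| == 1%N by rewrite hF1.
subst F; rewrite sub1set in hFs.
case/imset2P: hFs => u v _ huv0 hseq; subst s.
have huv : e u v by move: huv0; rewrite !inE.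
set e0 := del_edges e [set [set u; v]] in hnc.
have e0s : symmetric e0.
  by move=> p q; rewrite /e0 /del_edges hs setUC.
have hcs0 := sym_connect_sym e0s.
have huvn : u != v by apply: contraTneq huv => ->; rewrite hi.
have e_e0 : forall p q, e p q -> e0 p q || pairb u v p q.
  move=> p q hpq; rewrite /e0 /del_edges hpq inE /=.
  case: eqP => // h; rewrite orbC set2_inv //.
  by apply: contraTneq hpq => ->; rewrite hi.
have nuv : ~~ connect e0 u v.
  apply/negP => c; apply: hnc => x y.
  apply: (connect_sub _ (hconn x y)) => p q /e_e0 /orP [h|].
    exact: connect1.
  by case/orP => /andP [/eqP -> /eqP ->] //; rewrite hcs0.
set A := [set z | connect e0 u z].
have hu : u \in A by rewrite inE connect0.
have hv : v \notin A by rewrite inE.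
have side : forall p q, e p q -> ((p \in A) == (q \in A)) || pairb u v p q.
  move=> p q /e_e0 /orP [h|->]; last by rewrite orbT.
  by rewrite !inE (same_connect1r hcs0 h u) eqxx.
have sat : forall p q, p != q -> (p \in A) == (q \in A) -> e p q.
  move=> p q hpq hA; case: (boolP (e p q)) => // hn; exfalso.
  have hsim' := add_simple hsim hpq.
  have hc' : connected (add_edge e p q).
    move=> x y; apply: (connect_sub _ (hconn x y)) => a b hab.
    by apply: connect1; rewrite /add_edge hab.
  have hec' : edge_connectivity_is (add_edge e p q) 1.
    apply: (ec1_split hc' hu hv); first by rewrite /add_edge huv.
    move=> a b; rewrite /add_edge => /orP [/orP [hab|]|]; first exact: side.
      by case/andP => /eqP -> /eqP ->; rewrite hA.
    by case/andP => /eqP -> /eqP ->; rewrite eq_sym hA.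
  have := hmax _ hsim' hec'.
  have hqp : q != p by rewrite eq_sym.
  have := ABC_add_lt R hsim hpq hn (conn_nb (hconn p q) hpq) (conn_nb (hconn q p) hqp).
  lra.
have HS : Hshape e A u v.
  split => // p q; apply/idP/idP.
  - move=> h; have hpq : p != q by apply: contraTneq h => ->; rewrite hi.
    by rewrite hpq /=; move: (side p q h); rewrite /pairb orbA.
  - case/andP => hpq /orP [/orP [hA|/andP [/eqP -> /eqP ->]]|/andP [/eqP -> /eqP ->]] //.
      exact: sat.
    by rewrite hs.
have hcard : (#|A| + #|~: A| = n'.+2)%N by rewrite cardsC card_ord.
have ha1 : (0 < #|A|)%N by apply/card_gt0P; exists u.
have hb1 : (0 < #|~: A|)%N by apply/card_gt0P; exists v; rewrite inE.
case: (eqVneq #|A| 1%N) => [/eqP/cards1P [w hw]|ha2].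
  have hw' : u = w by move: hu; rewrite hw inE => /eqP.
  subst w; rewrite hw in HS; exact: iso_single HS.
case: (eqVneq #|~: A| 1%N) => [/eqP/cards1P [w hw]|hb2].
  have HS' := Hshape_sym HS; have hv' : v \in ~: A by rewrite inE.
  rewrite hw inE in hv'; rewrite -(eqP hv') in hw; rewrite hw in HS'.
  exact: iso_single HS'.
exfalso.
have ha : (2 <= #|A|)%N by rewrite ltn_neqAle eq_sym ha2.
have hb : (2 <= #|~: A|)%N by rewrite ltn_neqAle eq_sym hb2.
have h1 := ABC_H R HS.
have h2 := ABC_H R (Knk_H n').
rewrite cards1 cardsC1 card_ord /= in h2.
have h3 := Phi2_lt R _ _ ha hb.
have e3 : (#|A| + #|~: A| - 1)%N = n'.+1 by rewrite hcard.
rewrite e3 in h3.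
have h4 := hmax _ (Hshape_simple (Knk_H n')) (Hshape_ec1 (Knk_H n')).
rewrite !mulr2n in h1 h2.
have : ABC R e < ABC R e by lra.
by rewrite ltxx.
Qed.
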